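(* The ratio $\frac{\psi_2(x)}{\psi_1(x)}$ is strictly increasing for $x\ge1$.
   Context: For $x\ge1$, $\psi_1(x)=\frac32\int_0^{\pi/2}(1-x^{-2}\sin^2u)^{3/2}\,du$ and $\psi_2(x)=\frac32(1-x^{-2})^2\int_0^{\pi/2}\frac{\sin^4v}{\sqrt{1-(1-x^{-2})\sin^2v}}\,dv$. *)

(* Defs.v *)
From Stdlib Require Import Reals.
From Coquelicot Require Import Coquelicot.
Open Scope R_scope.

(* psi_1(x) = 3/2 * int_0^{pi/2} (1 - x^{-2} sin^2 u)^{3/2} du,
   with t^{3/2} written as t * sqrt t (t >= 0 here since x >= 1). *)
Definition psi1 (x : R) : R :=
  3/2 * RInt (fun u => let t := 1 - (sin u)^2 / x^2 in t * sqrt t) 0 (PI/2).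

Definition psi2 (x : R) : R :=
  3/2 * (1 - / x^2)^2 *
  RInt (fun v => (sin v)^4 / sqrt (1 - (1 - / x^2) * (sin v)^2)) 0 (PI/2).

(* Main.v *)
Require Import Defs.
From Stdlib Require Import Reals Lra.
From Coquelicot Require Import Coquelicot.
Open Scope R_scope.

Definition Fi (a u : R) : R := let t := 1 - (1 - a) * (sin u)^2 in t * sqrt t.
Definition Gi (a v : R) : R := (sin v)^4 / sqrt (1 - a * (sin v)^2).

Lemma sin2_bnd u : 0 <= (sin u)^2 <= 1.
Proof. pose proof (SIN_bound u). nra. Qed.

Lemma Fi_cont a u : 0 <= a -> continuous (Fi a) u.
Proof.
  intros Ha. unfold Fi.
  apply (continuous_mult (fun u => 1 - (1 - a) * sin u ^ 2)
                         (fun u => sqrt (1 - (1 - a) * sin u ^ 2))).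
  - apply (@ex_derive_continuous R_AbsRing R_NormedModule). auto_derive. auto.
  - apply continuous_sqrt_comp. apply (@ex_derive_continuous R_AbsRing R_NormedModule). auto_derive. auto.
Qed.

Lemma Gi_cont a v : a < 1 -> continuous (Gi a) v.
Proof.
  intros Ha. unfold Gi. apply (@ex_derive_continuous R_AbsRing R_NormedModule).
  pose proof (sin2_bnd v). auto_derive.
  assert (Hp : 0 < 1 - a * sin v ^ 2) by (destruct (Rle_or_lt 0 a); nra).
  simpl in Hp. repeat split; try lra.
  apply Rgt_not_eq, sqrt_lt_R0. lra.
Qed.

Lemma t_pos a u : 0 <= a -> 0 < u < PI/2 -> 0 < 1 - (1 - a) * (sin u)^2.
Proof.
  intros Ha Hu. pose proof (cos_gt_0 u ltac:(lra) ltac:(lra)).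
  pose proof (sin2_cos2 u). unfold Rsqr in *. pose proof (sin2_bnd u).
  assert (0 < cos u ^ 2) by (apply pow_lt; auto).
  assert (0 <= a * sin u ^ 2) by (apply Rmult_le_pos; lra).
  assert (E : 1 - (1 - a) * sin u ^ 2 = cos u ^ 2 + a * sin u ^ 2).
  { replace (sin u ^ 2) with (1 - cos u ^ 2) by (simpl; lra). ring. }
  rewrite E; lra.
Qed.

Lemma D_pos a : 0 <= a -> 0 < RInt (Fi a) 0 (PI/2).
Proof.
  intros Ha. apply RInt_gt_0.
  - pose proof PI_RGT_0; lra.
  - intros u Hu. unfold Fi. pose proof (t_pos a u Ha Hu).
    apply Rmult_lt_0_compat; auto. apply sqrt_lt_R0; auto.
  - intros; apply Fi_cont; auto.
Qed.

Lemma J_pos a : 0 <= a < 1 -> 0 < RInt (Gi a) 0 (PI/2).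
Proof.
  intros Ha. apply RInt_gt_0.
  - pose proof PI_RGT_0; lra.
  - intros u Hu. unfold Gi. pose proof (sin2_bnd u).
    assert (0 < sin u) by (apply sin_gt_0; lra).
    assert (a * sin u ^ 2 <= a * 1) by (apply Rmult_le_compat_l; lra).
    apply Rdiv_lt_0_compat. apply pow_lt; auto. apply sqrt_lt_R0; lra.
  - intros; apply Gi_cont; lra.
Qed.

Lemma J_mono a b : 0 <= a <= b -> b < 1 -> RInt (Gi a) 0 (PI/2) <= RInt (Gi b) 0 (PI/2).
Proof.
  intros Ha Hb. pose proof PI_RGT_0. apply RInt_le.
  - lra.
  - apply (@ex_RInt_continuous R_CompleteNormedModule); intros; apply Gi_cont; lra.
  - apply (@ex_RInt_continuous R_CompleteNormedModule); intros; apply Gi_cont; lra.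
  - intros u Hu. unfold Gi. pose proof (sin2_bnd u).
    apply Rmult_le_compat_l. pose proof (pow2_ge_0 (sin u ^ 2)).
    replace (sin u ^ 4) with ((sin u ^ 2)^2) by ring. lra.
    assert (b * sin u ^ 2 <= b * 1) by (apply Rmult_le_compat_l; lra).
    assert (a * sin u ^ 2 <= b * sin u ^ 2) by (apply Rmult_le_compat_r; lra).
    apply Rinv_le_contravar. apply sqrt_lt_R0; lra.
    apply sqrt_le_1_alt. lra.
Qed.

Lemma D_bound a b : 0 < a < b -> b < 1 ->
  RInt (Fi b) 0 (PI/2) <= (b/a) * sqrt (b/a) * RInt (Fi a) 0 (PI/2).
Proof.
  intros Ha Hb. pose proof PI_RGT_0.
  assert (Ex : ex_RInt (Fi a) 0 (PI/2)).
  { apply (@ex_RInt_continuous R_CompleteNormedModule); intros; apply Fi_cont; lra. }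
  change ((b/a) * sqrt (b/a) * RInt (Fi a) 0 (PI/2)) with
    (scal ((b/a) * sqrt (b/a)) (RInt (Fi a) 0 (PI/2))).
  rewrite <- RInt_scal by exact Ex.
  apply RInt_le.
  - lra.
  - apply (@ex_RInt_continuous R_CompleteNormedModule); intros; apply Fi_cont; lra.
  - exact (@ex_RInt_scal R_CompleteNormedModule (Fi a) 0 (PI/2) _ Ex).
  - intros u Hu. change (Fi b u <= (b/a) * sqrt (b/a) * Fi a u). unfold Fi.
    pose proof (sin2_bnd u).
    set (S := sin u ^ 2) in *.
    assert (Hr : 1 < b / a). { apply (Rmult_lt_reg_r a); [lra|]. field_simplify; lra. }
    assert (Htb : 0 <= 1 - (1 - b) * S).
    { assert ((1-b) * S <= (1-b) * 1) by (apply Rmult_le_compat_l; lra). lra. }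
    assert (Hta : 0 <= 1 - (1 - a) * S).
    { assert ((1-a) * S <= (1-a) * 1) by (apply Rmult_le_compat_l; lra). lra. }
    assert (Hle : 1 - (1 - b) * S <= b / a * (1 - (1 - a) * S)).
    { apply (Rmult_le_reg_r a); [lra|].
      replace (b / a * (1 - (1 - a) * S) * a) with (b * (1 - (1 - a) * S)) by (field; lra).
      assert ((b - a) * (1 - S) >= 0) by (apply Rle_ge, Rmult_le_pos; lra).
      assert (E : b * (1 - (1 - a) * S) - (1 - (1 - b) * S) * a = (b - a) * (1 - S)) by ring.
      lra. }
    assert (Hs : sqrt (1 - (1 - b) * S) <= sqrt (b/a) * sqrt (1 - (1 - a) * S)).
    { rewrite <- sqrt_mult by lra. apply sqrt_le_1_alt. exact Hle. }
    replace (b / a * sqrt (b / a) * ((1 - (1 - a) * S) * sqrt (1 - (1 - a) * S)))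
      with ((b / a * (1 - (1 - a) * S)) * (sqrt (b / a) * sqrt (1 - (1 - a) * S))) by ring.
    apply Rmult_le_compat; auto. apply sqrt_pos.
Qed.

Lemma cross p q X Y : 0 < X -> 0 < Y -> p * Y < q * X -> p / X < q / Y.
Proof.
  intros HX HY H. apply (Rmult_lt_reg_r (X * Y)); [nra|].
  replace (p / X * (X * Y)) with (p * Y) by (field; lra).
  replace (q / Y * (X * Y)) with (q * X) by (field; lra). exact H.
Qed.

Lemma sqrt_lt_self r : 1 < r -> sqrt r < r.
Proof.
  intros H. pose proof (sqrt_sqrt r ltac:(lra)).
  assert (1 < sqrt r). { rewrite <- sqrt_1. apply sqrt_lt_1_alt; lra. }
  nra.
Qed.

Lemma main_a a b : 0 <= a -> a < b -> b < 1 ->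
  3/2 * a^2 * RInt (Gi a) 0 (PI/2) / (3/2 * RInt (Fi a) 0 (PI/2)) <
  3/2 * b^2 * RInt (Gi b) 0 (PI/2) / (3/2 * RInt (Fi b) 0 (PI/2)).
Proof.
  intros H0 Hab Hb.
  pose proof (D_pos a H0) as Da. pose proof (D_pos b ltac:(lra)) as Db.
  pose proof (J_pos a ltac:(lra)) as Ja. pose proof (J_pos b ltac:(lra)) as Jb.
  pose proof (J_mono a b ltac:(lra) Hb) as Jab.
  set (DA := RInt (Fi a) 0 (PI/2)) in *. set (DB := RInt (Fi b) 0 (PI/2)) in *.
  set (JA := RInt (Gi a) 0 (PI/2)) in *. set (JB := RInt (Gi b) 0 (PI/2)) in *.
  apply cross; try lra.
  destruct (Req_dec a 0) as [Z|Z].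
  - subst a. assert (0 < b^2) by (apply pow_lt; lra).
    assert (0 < b^2 * JB) by (apply Rmult_lt_0_compat; lra).
    assert (0 < b^2 * JB * DA) by (apply Rmult_lt_0_compat; lra).
    replace (3 / 2 * 0 ^ 2 * JA * (3 / 2 * DB)) with 0 by ring. nra.
  - assert (Ha : 0 < a) by lra.
    pose proof (D_bound a b ltac:(lra) Hb) as HD. fold DA DB in HD.
    set (r := b / a) in *.
    assert (Hr : 1 < r). { unfold r. apply (Rmult_lt_reg_r a); [lra|]. field_simplify; lra. }
    assert (Hbr : b = a * r) by (unfold r; field; lra).
    pose proof (sqrt_lt_self r Hr) as Hs.
    assert (K1 : 0 < a^2 * JA) by (apply Rmult_lt_0_compat; [apply pow_lt|]; lra).
    assert (S1 : a^2 * JA * DB <= a^2 * JA * (r * sqrt r * DA)) by (apply Rmult_le_compat_l; lra).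
    assert (S2 : r * sqrt r * DA < r * r * DA).
    { apply Rmult_lt_compat_r; [lra|]. apply Rmult_lt_compat_l; lra. }
    assert (S3 : a^2 * JA * (r * sqrt r * DA) < a^2 * JA * (r * r * DA)) by (apply Rmult_lt_compat_l; lra).
    assert (S4 : a^2 * JA * (r * r * DA) = b^2 * JA * DA) by (rewrite Hbr; ring).
    assert (S5 : b^2 * JA * DA <= b^2 * JB * DA).
    { apply Rmult_le_compat_r; [lra|]. apply Rmult_le_compat_l; [apply pow_le|]; lra. }
    assert (E1 : 3 / 2 * a ^ 2 * JA * (3 / 2 * DB) = 9/4 * (a^2 * JA * DB)) by (clear; field).
    assert (E2 : 3 / 2 * b ^ 2 * JB * (3 / 2 * DA) = 9/4 * (b^2 * JB * DA)) by (clear; field).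
    rewrite E1, E2. lra.
Qed.

Theorem mainTheorem18 :
  forall x y : R, 1 <= x -> x < y -> psi2 x / psi1 x < psi2 y / psi1 y.
Proof.
  assert (P1 : forall x, 1 <= x -> psi1 x = 3/2 * RInt (Fi (1 - / x^2)) 0 (PI/2)).
  { intros x Hx. unfold psi1. f_equal. apply RInt_ext. intros u _.
    assert (E : 1 - (1 - (1 - / x^2)) * sin u ^ 2 = 1 - sin u ^ 2 / x ^ 2)
      by (unfold Rdiv; field; try apply pow_nonzero; lra).
    unfold Fi. rewrite E. reflexivity. }
  assert (P2 : forall x, psi2 x = 3/2 * (1 - / x^2)^2 * RInt (Gi (1 - / x^2)) 0 (PI/2))
    by reflexivity.
  intros x y Hx Hxy.
  rewrite (P1 x Hx), (P1 y ltac:(lra)), !P2.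
  assert (Ix : / y^2 < / x^2).
  { apply Rinv_lt_contravar. apply Rmult_lt_0_compat; apply pow_lt; lra.
    simpl; nra. }
  assert (Iy : / x^2 <= 1).
  { rewrite <- Rinv_1. apply Rinv_le_contravar; [lra|]. rewrite <- (pow1 2). apply pow_incr; lra. }
  assert (Iz : 0 < / y^2) by (apply Rinv_0_lt_compat, pow_lt; lra).
  apply main_a; lra.
Qed.
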